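(* Let $n\geq 2$ and let $\mathcal R(P_n)=u_1,\ldots,u_k$, so $u_1>_{\mathcal R}\cdots>_{\mathcal R}u_k$. Let $1<i<j\leq k$, and suppose $u_j$ is divisible by some variable belonging to the ideal $(u_1,\ldots,u_{i-1}):(u_i)$. Then either $u_iu_j$ is not a minimal generator of $J(P_n)^2$, or the expression $u_iu_j$ is not the maximal expression of the monomial $u_iu_j$.
   Context: Let $K$ be a field and $S=K[x_1,\ldots,x_n]$. For $m\geq 1$, $P_m$ is the path graph on vertices $x_1,\ldots,x_m$ with edges $\{x_i,x_{i+1}\}$. The cover ideal $J(P_m)$ is generated by the monomials $\prod_{x\in C}x$ with $C$ a minimal vertex cover of $P_m$. For a monomial ideal $I$, $G(I)$ is its set of minimal monomial generators and $F(I^2)=\{uv:u,v\in G(I)\}$. The rooted list $\mathcal R(P_m)$ is defined recursively: $\mathcal R(P_1)$ empty; $\mathcal R(P_2)=x_1,x_2$; $\mathcal R(P_3)=x_2,x_1x_3$; $\mathcal R(P_4)=x_1x_3,x_2x_3,x_2x_4$; for $m\geq5$, if $\mathcal R(P_{m-2})=u_1,\ldots,u_r$ and $\mathcal R(P_{m-3})=v_1,\ldots,v_s$, then $\mathcal R(P_m)=x_{m-1}u_1,\ldots,x_{m-1}u_r,x_mx_{m-2}v_1,\ldots,x_mx_{m-2}v_s$; it lists each element of $G(J(P_m))$ once, and $w_i>_{\mathcal R}w_j$ iff $w_i$ precedes $w_j$. With $\mathcal R(P_m)=u_1,\ldots,u_q$, each $M\in F(J(P_m)^2)$ can be written $u_1^{a_1}\cdots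 u_q^{a_q}$ with $a_i\geq0$, $\sum a_i=2$; the maximal expression of $M$ is the one with lexicographically largest exponent vector $(a_1,\ldots,a_q)$. ''The expression $u_iu_j$ is maximal'' means the exponent vector $e_i+e_j$ is that of the maximal expression of the monomial $u_iu_j$. *)

(* Defs.v *)
From mathcomp Require Import all_boot.
Set Implicit Arguments. Unset Strict Implicit. Unset Printing Implicit Defensive.

(* A monomial in the variables x_1, x_2, ... is its exponent function
   (variable index v >= 1 |-> exponent of x_v).  Monomials are compared
   pointwise. *)
Definition mon := nat -> nat.

Definition mon_eq (a b : mon) : Prop := forall v, a v = b v.
Definition mon_dvd (a b : mon) : Prop := forall v, a v <= b v.
Definition mon_mul (a b : mon) : mon := fun v => a v + b v.
Definition var (v : nat) : mon := fun w => nat_of_bool (w == v).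
Definition mon_of (s : seq nat) : mon := fun v => count_mem v s.

(* Monomial ideal membership: a monomial lies in the ideal generated by the
   monomials gens iff some generator divides it. *)
Definition in_monideal (gens : seq mon) (M : mon) : Prop :=
  exists2 l, l < size gens & mon_dvd (nth (fun _ => 0) gens l) M.
(* A monomial f lies in the colon ideal (gens) : (u) iff f*u lies in (gens). *)
Definition in_colon (gens : seq mon) (u f : mon) : Prop :=
  in_monideal gens (mon_mul f u).

(* Path graph P_m on vertices x_1..x_m with edges {x_i, x_{i+1}}. *)
Definition is_vcover_path (m : nat) (C : seq nat) : Prop :=
  {subset C <= [pred v | 1 <= v <= m]} /\
  forall i, 1 <= i -> i < m -> (i \in C) || (i.+1 \in C).
Definition is_min_vcover_path (m : nat) (C : seq nat) : Prop :=
  is_vcover_path m C /\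
  forall D : seq nat, {subset D <= C} -> is_vcover_path m D -> {subset C <= D}.

(* the generator prod_{x in C} x of J(P_m) attached to a vertex cover *)
Definition cover_mon (C : seq nat) : mon := fun v => nat_of_bool (v \in C).

(* G(J(P_m)) : monomial g is a minimal generator of the cover ideal *)
Definition in_GJ (m : nat) (g : mon) : Prop :=
  exists C, is_min_vcover_path m C /\ mon_eq g (cover_mon C).

Definition in_J2 (m : nat) (M : mon) : Prop :=
  exists u w, in_GJ m u /\ in_GJ m w /\ mon_dvd (mon_mul u w) M.

Definition mingen_J2 (m : nat) (M : mon) : Prop :=
  in_J2 m M /\ forall N, in_J2 m N -> mon_dvd N M -> mon_eq N M.

(* The rooted list R(P_m); each entry is the list of indices of the variables
   whose product is the monomial. *)
Fixpoint rooted (m : nat) : seq (seq nat) :=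
  match m with
  | 0 | 1 => [::]
  | 2 => [:: [:: 1]; [:: 2]]
  | 3 => [:: [:: 2]; [:: 1; 3]]
  | 4 => [:: [:: 1; 3]; [:: 2; 3]; [:: 2; 4]]
  | S (S ((S p) as q)) =>
      [seq m.-1 :: u | u <- rooted q] ++ [seq m :: m.-2 :: w | w <- rooted p]
  end.

(* Expressions: exponent vectors (a_1..a_q) (a seq of length q = size R) with
   sum 2; the monomial u_1^{a_1} ... u_q^{a_q}. *)
Definition expr_mon (R : seq (seq nat)) (a : seq nat) : mon :=
  fun v => \sum_(l < size R) nth 0 a l * mon_of (nth [::] R l) v.

Definition is_expr (R : seq (seq nat)) (a : seq nat) (M : mon) : Prop :=
  size a = size R /\ sumn a = 2 /\ mon_eq (expr_mon R a) M.

Definition lex_gt (a b : seq nat) : Prop :=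
  exists t, (forall s, s < t -> nth 0 a s = nth 0 b s) /\ nth 0 b t < nth 0 a t.

Definition is_max_expr (R : seq (seq nat)) (a : seq nat) (M : mon) : Prop :=
  is_expr R a M /\ forall b, is_expr R b M -> ~ lex_gt b a.

(* exponent vector e_i + e_j of length q (0-based indices) *)
Definition e2 (q i j : nat) : seq nat :=
  mkseq (fun l => nat_of_bool (l == i) + nat_of_bool (l == j)) q.

(* Main.v *)
Require Import Defs.
From mathcomp Require Import all_boot zify.
From Stdlib Require Import Classical.
Set Implicit Arguments. Unset Strict Implicit. Unset Printing Implicit Defensive.

Definition inr (n : nat) (p : nat -> bool) := forall k, p k -> 1 <= k <= n.
Definition cov (n : nat) (p : nat -> bool) := forall k, 1 <= k -> k < n -> p k || p k.+1.
Definition locmin (n : nat) (p : nat -> bool) :=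
  forall k, p k -> ((1 < k) && ~~ p k.-1) || ((k < n) && ~~ p k.+1).
Definition mc n p := [/\ inr n p, cov n p & locmin n p].
Definition ltop n (p q : nat -> bool) :=
  exists k, [/\ k <= n, ~~ p k, q k & forall m, k < m -> m <= n -> p m = q m].
Definition sm (u : seq nat) : nat -> bool := fun k => k \in u.

Definition covb n (p : nat -> bool) := all (fun k => p k || p k.+1) (iota 1 n.-1).
Definition locminb n (p : nat -> bool) :=
  all (fun k => p k ==> (((1 < k) && ~~ p k.-1) || ((k < n) && ~~ p k.+1))) (iota 1 n).
Definition ltopb n (p q : nat -> bool) :=
  has (fun k => ~~ p k && q k && all (fun m => p m == q m) (iota k.+1 (n - k))) (iota 0 n.+1).

Lemma covP n p : covb n p -> cov n p.
Proof. move=> /allP H k H1 H2; apply: H; rewrite mem_iota; lia. Qed.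
Lemma covbP n p : cov n p -> covb n p.
Proof. move=> H; apply/allP=> k; rewrite mem_iota => Hk; apply: H; lia. Qed.
Lemma locminP n p : inr n p -> locminb n p -> locmin n p.
Proof. move=> Hr /allP H k Hk. have := H k. rewrite mem_iota Hk /=.
 have := Hr k Hk. move=> Hk2 H3; apply: H3; lia. Qed.
Lemma locminbP n p : locmin n p -> locminb n p.
Proof. move=> H; apply/allP=> k _; apply/implyP; exact: H. Qed.
Lemma ltopP n p q : ltopb n p q -> ltop n p q.
Proof.
move=> /hasP [k]; rewrite mem_iota => Hk /andP [/andP [H1 H2] /allP H3].
exists k; split => //.
move=> m Hm1 Hm2; apply/eqP; apply: H3; rewrite mem_iota; lia.
Qed.

Lemma cnt_lt (X : nat -> bool) c s : c \in s -> X c ->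
  count (fun k => X k && (k != c)) s < count X s.
Proof.
elim: s => //= a s IH; rewrite in_cons => /orP [/eqP <- | Hc] Xc.
- rewrite Xc eqxx /=. have : count (fun k => X k && (k != c)) s <= count X s.
    by apply: sub_count => k /andP [].
  lia.
- have := IH Hc Xc. case: (X a); case: (a != c) => /=; lia.
Qed.

Lemma mincov_sub n X : inr n X -> cov n X -> exists X0, mc n X0 /\ (forall k, X0 k -> X k).
Proof.
move: {2}(count X (iota 1 n)) (erefl (count X (iota 1 n))) => N.
elim/ltn_ind: N X => N IH X HN Hr Hc.
case Hl: (locminb n X).
  exists X; split => //; split => //; exact: locminP.
move/negbT: Hl => /allPn [c]; rewrite mem_iota => Hci.
rewrite negb_imply => /andP [Xc Hn].
pose X' := fun k => X k && (k != c).
have Hlt : count X' (iota 1 n) < N by rewrite -HN; apply: cnt_lt => //; rewrite mem_iota.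
have Hr' : inr n X' by move=> k /andP [/Hr].
have Hc' : cov n X'.
  move: Hn; rewrite negb_or !negb_and !negbK => /andP [Ha Hb].
  move=> k H1 H2; rewrite /X'. have := Hc k H1 H2.
  case: (eqVneq k c) => [Ekc|Hkc] Hk.
  + have Hcn : c < n by rewrite -Ekc.
    rewrite Ekc; apply/orP; right; apply/andP; split; last by apply/eqP; lia.
    by move: Hb; rewrite Hcn.
  + case: (eqVneq k.+1 c) => [Hk1|Hk1].
    * apply/orP; left; apply/andP; split => //.
      by move: Ha; rewrite -Hk1 /= ltnS H1.
    * by rewrite /= !andbT.
have [X0 [H1 H2]] := IH _ Hlt X' erefl Hr' Hc'.
exists X0; split => // k /H2 /andP []//.
Qed.

Lemma mc_GJ n X : mc n X -> in_GJ n (fun k => nat_of_bool (X k)).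
Proof.
move=> [Hr Hc Hm].
have HC : forall k, (k \in filter X (iota 1 n)) = X k.
  move=> k; rewrite mem_filter mem_iota; case Xk: (X k) => //=.
  have := Hr k Xk; lia.
exists (filter X (iota 1 n)); split; last by move=> k; rewrite /cover_mon HC.
split; first split.
- move=> k; rewrite HC => /Hr //.
- move=> k H1 H2; rewrite !HC; exact: Hc.
- move=> D HD [_ HDc] c; rewrite HC => Xc.
  have := Hm c Xc. case/orP => /andP [H1 H2].
  + have := HDc c.-1; rewrite prednK; last lia.
    move=> H; have {H} := H ltac:(lia) ltac:(have := Hr c Xc; lia).
    case/orP => // Hd. have := HD _ Hd. by rewrite HC (negbTE H2).
  + have := HDc c ltac:(have := Hr c Xc; lia) H1.
    case/orP => // Hd. have := HD _ Hd. by rewrite HC (negbTE H2).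
Qed.

Lemma mc_ext n P Q : P =1 Q -> mc n P -> mc n Q.
Proof.
move=> E [Hr Hc Hm]; split.
- by move=> k; rewrite -E => /Hr.
- by move=> k H1 H2; rewrite -!E; apply: Hc.
- by move=> k; rewrite -!E => /Hm.
Qed.

Lemma ltop_ext n P Q P' Q' : P' =1 P -> Q' =1 Q -> ltop n P Q -> ltop n P' Q'.
Proof.
move=> E1 E2 [k [H1 H2 H3 H4]]; exists k; split => //; rewrite ?E1 ?E2 //.
by move=> m Hm1 Hm2; rewrite E1 E2; apply: H4.
Qed.

Lemma inr_out n P k : inr n P -> n < k -> P k = false.
Proof. by move=> Hr Hk; apply/negP => /Hr; lia. Qed.

Definition c1 p (P : nat -> bool) := fun k => (k == p.+2) || P k.
Definition c2 p (P : nat -> bool) := fun k => (k == p.+3) || (k == p.+1) || P k.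

Lemma mc_c1 p P : mc p.+1 P -> mc p.+3 (c1 p P).
Proof.
case=> Hr Hc Hm; rewrite /c1; split.
- move=> k /orP [/eqP -> | /Hr]; lia.
- move=> k H1 H2; case: (ltnP k p.+1) => Hk.
    by have := Hc k H1 Hk; case/orP => ->; rewrite ?orbT.
  have [->|->] : k = p.+1 \/ k = p.+2 by lia.
    by rewrite eqxx orbT.
  by rewrite eqxx.
- move=> k /orP [/eqP -> | Pk].
    rewrite /= (@inr_out _ _ p.+3 Hr) //=; lia.
  have := Hm k Pk; have := Hr k Pk => Hk.
  case/orP => /andP [H1 H2].
    rewrite H1 /=; move: H2; case: (P k.-1) => //= _; lia.
  move: H2; case: (P k.+1) => //= _; lia.
Qed.

Lemma mc_c2 p P : mc p P -> mc p.+3 (c2 p P).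
Proof.
case=> Hr Hc Hm; rewrite /c2; split.
- move=> k /orP [/orP [/eqP -> | /eqP ->] | /Hr]; lia.
- move=> k H1 H2; case: (ltnP k p) => Hk.
    by have := Hc k H1 Hk; case/orP => ->; rewrite ?orbT.
  have [->|[->|->]] : k = p \/ k = p.+1 \/ k = p.+2 by lia.
  + by rewrite eqxx !orbT.
  + by rewrite eqxx !orbT.
  + by rewrite eqxx !orbT.
- move=> k /orP [/orP [/eqP -> | /eqP ->] | Pk].
  + rewrite /= (@inr_out _ _ p.+2 Hr) //=; lia.
  + rewrite /= (@inr_out _ _ p.+2 Hr) //=; lia.
  have := Hm k Pk; have := Hr k Pk => Hk.
  case/orP => /andP [H1 H2].
    rewrite H1 /=; move: H2; case: (P k.-1) => //= _; lia.
  move: H2; case: (P k.+1) => //= _; lia.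
Qed.

Lemma dec1 p P : mc p.+3 P -> P p.+2 ->
  mc p.+1 (fun k => P k && (k <= p.+1)) /\ P =1 c1 p (fun k => P k && (k <= p.+1)).
Proof.
case=> Hr Hc Hm H2.
have H3 : P p.+3 = false.
  apply/negP => H; have := Hm _ H; rewrite /= H2 /= ltnn /=. done.
split; first split.
- move=> k /andP [/Hr]; lia.
- move=> k K1 K2; have := Hc k K1 ltac:(lia). rewrite K2 (ltnW K2) !andbT //.
- move=> k /andP [Pk Kk]; have := Hm k Pk.
  case/orP => /andP [K1 K2].
    by rewrite K1 (negbTE K2).
  case: (ltnP k p.+1) => K3.
    by rewrite (negbTE K2) orbT.
  have Ek : k = p.+1 by lia.
  by move: K2; rewrite Ek H2.
- move=> k; rewrite /c1.
  case: (ltngtP k p.+2) => K.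
  + by rewrite /= (_ : k <= p.+1) ?andbT //; lia.
  + rewrite /= (_ : k <= p.+1 = false) ?andbF; last by apply/negbTE; lia.
    case: (eqVneq k p.+3) => [->//|K']. apply: inr_out Hr _; lia.
  + by rewrite K H2.
Qed.

Lemma dec2 p P : mc p.+3 P -> ~~ P p.+2 ->
  mc p (fun k => P k && (k <= p)) /\ P =1 c2 p (fun k => P k && (k <= p)).
Proof.
case=> Hr Hc Hm H2.
have H3 : P p.+3 by have := Hc p.+2 erefl (ltnSn _); rewrite (negbTE H2).
have H1 : P p.+1 by have := Hc p.+1 erefl (ltnW (ltnSn _)); rewrite (negbTE H2) orbF.
split; first split.
- move=> k /andP [/Hr]; lia.
- move=> k K1 K2; have := Hc k K1 ltac:(lia). rewrite K2 (ltnW K2) !andbT //.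
- move=> k /andP [Pk Kk]; have := Hm k Pk.
  case/orP => /andP [K1 K2].
    by rewrite K1 (negbTE K2).
  case: (ltnP k p) => K3.
    by rewrite (negbTE K2) orbT.
  have Ek : k = p by lia.
  by move: K2; rewrite Ek H1.
- move=> k; rewrite /c2.
  case: (ltngtP k p.+1) => K.
  + have E : (k == p.+3) = false by apply/negbTE; lia.
    rewrite E /=. have E2 : k <= p by lia.
    by rewrite E2 andbT.
  + have E : (k <= p) = false by apply/negbTE; lia.
    rewrite E andbF orbF.
    case: (eqVneq k p.+3) => [->//|K'] /=.
    case: (eqVneq k p.+2) => [->|K'']; first by apply/negbTE.
    apply: inr_out Hr _; lia.
  + by rewrite K H1 !orbT.
Qed.

Lemma ltop_c1 p A B : inr p.+1 A -> inr p.+1 B -> ltop p.+1 A B -> ltop p.+3 (c1 p A) (c1 p B).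
Proof.
move=> HA HB [k [K1 K2 K3 K4]]; exists k; split.
- lia.
- rewrite /c1 (_ : k == p.+2 = false) //; apply/negbTE; lia.
- by rewrite /c1 K3 orbT.
- move=> m M1 M2; rewrite /c1; case: (eqVneq m p.+2) => //= Hm.
  case: (leqP m p.+1) => Hm2; first exact: K4.
  by rewrite (inr_out HA Hm2) (inr_out HB Hm2).
Qed.

Lemma ltop_c2 p A B : inr p A -> inr p B -> ltop p A B -> ltop p.+3 (c2 p A) (c2 p B).
Proof.
move=> HA HB [k [K1 K2 K3 K4]]; exists k; split.
- lia.
- have E1 : (k == p.+3) = false by apply/negbTE; lia.
  have E2 : (k == p.+1) = false by apply/negbTE; lia.
  by rewrite /c2 E1 E2.
- by rewrite /c2 K3 orbT.
- move=> m M1 M2; rewrite /c2; case: (eqVneq m p.+3) => //= Hm.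
  case: (eqVneq m p.+1) => //= Hm'.
  case: (leqP m p) => Hm2; first exact: K4.
  by rewrite (inr_out HA Hm2) (inr_out HB Hm2).
Qed.

Lemma ltop_c12 p A B : inr p.+1 A -> inr p B -> ltop p.+3 (c1 p A) (c2 p B).
Proof.
move=> HA HB; exists p.+3; split => //.
- rewrite /c1 (_ : p.+3 == p.+2 = false) ?(inr_out HA) //; lia.
- by rewrite /c2 eqxx.
- move=> m M1 M2; lia.
Qed.

Lemma rootedE p : 2 <= p -> rooted p.+3 =
  [seq p.+2 :: u | u <- rooted p.+1] ++ [seq p.+3 :: p.+1 :: w | w <- rooted p].
Proof. by case: p => [|[|p]]. Qed.

Lemma sm_c1 p u : sm (p.+2 :: u) =1 c1 p (sm u).
Proof. by move=> k; rewrite /sm /c1 in_cons. Qed.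
Lemma sm_c2 p u : sm (p.+3 :: p.+1 :: u) =1 c2 p (sm u).
Proof. by move=> k; rewrite /sm /c2 !in_cons orbA. Qed.

Definition baseR1 m := all (fun u => uniq u && all (fun k => 1 <= k <= m) u
   && covb m (sm u) && locminb m (sm u)) (rooted m).

Lemma rooted_mc m u : u \in rooted m -> uniq u /\ mc m (sm u).
Proof.
elim/ltn_ind: m u => m IH u.
case: (leqP m 4) => Hm.
  have : baseR1 m by case: m Hm {IH} => [|[|[|[|[|]]]]].
  move=> /allP H /H /andP [/andP [/andP [Hu /allP Hr] Hc] Hl].
  have Hr' : inr m (sm u) by move=> k /Hr.
  split => //; split => //; [exact: covP | exact: locminP].
have [p Ep] : exists p, m = p.+3 by exists (m - 3); lia.
subst m; rewrite rootedE; last lia.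
rewrite mem_cat => /orP [] /mapP [w Hw ->].
- have [Hu Hmc] := IH p.+1 ltac:(lia) w Hw.
  split.
    case: (Hmc) => Hr _ _; rewrite /= Hu andbT; apply/negP => /Hr; lia.
  apply: mc_ext (mc_c1 Hmc) => k; by rewrite sm_c1.
- have [Hu Hmc] := IH p ltac:(lia) w Hw.
  split.
    case: (Hmc) => Hr _ _.
    rewrite /= Hu andbT in_cons negb_or.
    apply/andP; split; [apply/andP; split|].
    + apply/eqP; lia.
    + apply/negP => /Hr; lia.
    + apply/negP => /Hr; lia.
  apply: mc_ext (mc_c2 Hmc) => k; by rewrite sm_c2.
Qed.

Definition baseR3 m := let sz := size (rooted m) in
  all (fun a => all (fun c => (a < c) ==>
    ltopb m (sm (nth [::] (rooted m) a)) (sm (nth [::] (rooted m) c))) (iota 0 sz)) (iota 0 sz).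

Lemma rooted_inr m a : a < size (rooted m) -> inr m (sm (nth [::] (rooted m) a)).
Proof. by move=> Ha; case: (rooted_mc (mem_nth [::] Ha)) => _ []. Qed.

Lemma rooted_sorted m a c : a < c -> c < size (rooted m) ->
  ltop m (sm (nth [::] (rooted m) a)) (sm (nth [::] (rooted m) c)).
Proof.
elim/ltn_ind: m a c => m IH a c Hac Hc.
case: (leqP m 4) => Hm.
  have : baseR3 m by case: m Hm {IH Hc} => [|[|[|[|[|]]]]].
  move=> /allP /(_ a) H. apply: ltopP.
  have := H ltac:(rewrite mem_iota; lia) => /allP /(_ c).
  rewrite mem_iota Hac /= => H'; exact: H'; lia.
have [p Ep] : exists p, m = p.+3 by exists (m - 3); lia.
subst m; move: Hc; rewrite rootedE; last lia.
rewrite size_cat !size_map => Hc.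
rewrite !nth_cat !size_map.
case: (ltnP c (size (rooted p.+1))) => Hc1.
  rewrite (ltn_trans Hac Hc1) !(nth_map [::]) //; last exact: (ltn_trans Hac Hc1).
  apply: ltop_ext (sm_c1 _ _) (sm_c1 _ _) _ => //.
  apply: ltop_c1; [apply: rooted_inr; exact: (ltn_trans Hac Hc1)|apply: rooted_inr => //|].
  by apply: IH => //; lia.
case: (ltnP a (size (rooted p.+1))) => Ha1.
  rewrite !(nth_map [::]) //; last lia.
  apply: ltop_ext (sm_c1 _ _) (sm_c2 _ _) _.
  by apply: ltop_c12; apply: rooted_inr => //; lia.
rewrite !(nth_map [::]); try lia.
apply: ltop_ext (sm_c2 _ _) (sm_c2 _ _) _.
apply: ltop_c2; try (apply: rooted_inr; lia).
apply: IH; lia.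
Qed.

Fixpoint allbits n : seq bitseq :=
  if n is n'.+1 then [seq true :: s | s <- allbits n'] ++ [seq false :: s | s <- allbits n']
  else [:: [::]].

Lemma allbitsP n bs : size bs = n -> bs \in allbits n.
Proof.
elim: n bs => [|n IH] [|b bs] //= [Hs].
rewrite mem_cat; apply/orP; case: b; [left|right]; apply/mapP; exists bs => //; exact: IH.
Qed.

Definition baseR2 m := all (fun bs => (covb m (sm (mask bs (iota 1 m))) &&
   locminb m (sm (mask bs (iota 1 m)))) ==> (mask bs (iota 1 m) \in rooted m)) (allbits m).

Lemma covb_ext n P Q : P =1 Q -> covb n P = covb n Q.
Proof. by move=> E; apply: eq_all => k; rewrite !E. Qed.
Lemma locminb_ext n P Q : P =1 Q -> locminb n P = locminb n Q.
Proof. by move=> E; apply: eq_all => k; rewrite !E. Qed.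

Lemma rooted_complete m P : 2 <= m -> mc m P ->
  exists2 a, a < size (rooted m) & sm (nth [::] (rooted m) a) =1 P.
Proof.
elim/ltn_ind: m P => m IH P H2 Hmc.
case: (leqP m 4) => Hm.
  have : baseR2 m by case: m Hm H2 {IH Hmc} => [|[|[|[|[|]]]]].
  move=> /allP /(_ (map P (iota 1 m))) H.
  have {H} := H (allbitsP (etrans (size_map _ _) (size_iota _ _))).
  rewrite -filter_mask.
  case: Hmc => Hr Hc Hl.
  have E : sm (filter P (iota 1 m)) =1 P.
    move=> k; rewrite /sm mem_filter mem_iota; case Pk: (P k) => //=.
    have := Hr k Pk; lia.
  rewrite (covb_ext _ E) (locminb_ext _ E) covbP // locminbP // => /implyP /(_ erefl) Hin.
  exists (index (filter P (iota 1 m)) (rooted m)); first by rewrite index_mem.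
  by rewrite nth_index.
have [p Ep] : exists p, m = p.+3 by exists (m - 3); lia.
subst m; rewrite rootedE; last lia.
rewrite size_cat !size_map.
case HP: (P p.+2).
  have [Hmc' E] := dec1 Hmc HP.
  have [a Ha Ea] := IH p.+1 ltac:(lia) _ ltac:(lia) Hmc'.
  exists a; first lia.
  rewrite nth_cat size_map Ha (nth_map [::]) // => k.
  by rewrite sm_c1 E /c1 Ea.
have [Hmc' E] := dec2 Hmc (negbT HP).
have [a Ha Ea] := IH p ltac:(lia) _ ltac:(lia) Hmc'.
exists (size (rooted p.+1) + a); first lia.
rewrite nth_cat size_map ltnNge leq_addr /= addKn (nth_map [::]) // => k.
by rewrite sm_c2 E /c2 Ea.
Qed.

Lemma key n U L v : mc n U -> mc n L -> (forall k, L k -> (k == v) || U k) ->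
  ltop n L U -> [/\ ~~ U v, v < n, U v.+1 & (v.+2 <= n -> U v.+2)].
Proof.
move=> [HrU HcU HmU] [HrL HcL HmL] Hsub [k [K1 K2 K3 K4]].
have Kr := HrU k K3.
have := HmU k K3; case/orP => /andP [M1 M2].
- have := HcL k.-1 ltac:(lia) ltac:(lia); rewrite prednK; last lia.
  rewrite (negbTE K2) orbF => /Hsub /orP [/eqP Ekv|]; last by rewrite (negbTE M2).
  have Ek : k = v.+1 by lia.
  rewrite Ek /= in M2 K2 K3 K4 K1.
  split; [done | lia | done | ].
  move=> Hv2; have := HcL v.+1 ltac:(lia) ltac:(lia); rewrite (negbTE K2) /= => HL.
  by rewrite -K4.
- have := HcL k ltac:(lia) M1; rewrite (negbTE K2) /= => HL.
  by move: M2; rewrite -K4 ?HL.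
Qed.

Lemma flip n U W e : inr n U -> inr n W -> cov n U -> cov n W -> U e != W e ->
  (e < n -> U e.+1 && W e.+1) ->
  exists U' W', [/\ inr n U' /\ inr n W', cov n U' /\ cov n W',
     forall k, U' k + W' k = U k + W k,
     forall k, e < k -> U' k = U k /\ W' k = W k & U' e = W e /\ W' e = U e].
Proof.
move=> HrU HrW HcU HcW He Htop.
have Hen : 1 <= e <= n.
  move: He; case Ue: (U e); first by move=> _; exact: HrU.
  case We: (W e) => // _; exact: HrW.
pose Pb b := (b <= e) && [forall q : 'I_e.+1, (b <= q) ==> (U q != W q)].
have HPe : exists b, Pb b.
  exists e; rewrite /Pb leqnn /=; apply/forallP => q; apply/implyP => Hq.
  have -> : (q : nat) = e by have := ltn_ord q; lia.
  done.
pose b := ex_minn HPe.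
have [Pbb Hmin] : Pb b /\ forall b', Pb b' -> b <= b'.
  by rewrite /b; case: ex_minnP.
move: Pbb => /andP [Hbe /forallP Hall].
have Hb : forall q, b <= q <= e -> U q != W q.
  move=> q /andP [H1 H2]; have := Hall (Ordinal (n:=e.+1) (m:=q) ltac:(lia)).
  by rewrite /= H1.
have Hb1 : 1 <= b.
  case: (posnP b) => // Hb0; have := Hb 0; rewrite Hb0 /= => /(_ (leq0n _)).
  case U0: (U 0); first by have := HrU 0 U0.
  case W0: (W 0); first by have := HrW 0 W0.
  done.
have Hlow : 1 < b -> U b.-1 && W b.-1.
  move=> Hb2.
  have Hnot : ~~ Pb b.-1 by apply/negP => /Hmin; lia.
  move: Hnot; rewrite /Pb (_ : b.-1 <= e) /=; last lia.
  move=> /forallPn [q]; rewrite negb_imply => /andP [Hq1 Hq2].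
  have Eq : (q : nat) = b.-1.
    case: (eqVneq (q : nat) b.-1) => // Hq3.
    have := Hb q ltac:(have := ltn_ord q; lia); by rewrite (negbTE Hq2).
  rewrite Eq in Hq2; move: Hq2.
  have := HcU b.-1 ltac:(lia) ltac:(lia).
  have := HcW b.-1 ltac:(lia) ltac:(lia).
  rewrite prednK; last lia.
  have := Hb b ltac:(lia).
  case: (U b.-1); case: (W b.-1); case: (U b); case: (W b) => //.
pose inI k := (b <= k <= e).
exists (fun k => if inI k then W k else U k), (fun k => if inI k then U k else W k).
split.
- split=> k; case: (inI k); by [apply: HrU | apply: HrW].
- split => k K1 K2;
  case I1: (inI k); case I2: (inI k.+1); rewrite /inI in I1 I2.
  + exact: HcW.
  + have Ek : k = e by lia.
    by have := Htop ltac:(lia); rewrite -Ek => /andP [-> _]; rewrite orbT.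
  + have Ek : k = b.-1 by lia.
    by have := Hlow ltac:(lia); rewrite Ek => /andP [-> _].
  + exact: HcU.
  + exact: HcU.
  + have Ek : k = e by lia.
    by have := Htop ltac:(lia); rewrite -Ek => /andP [_ ->]; rewrite orbT.
  + have Ek : k = b.-1 by lia.
    by have := Hlow ltac:(lia); rewrite Ek => /andP [_ ->].
  + exact: HcW.
- by move=> k; case: (inI k) => //; rewrite addnC.
- move=> k Hk; rewrite /inI (_ : k <= e = false) ?andbF //; lia.
- by rewrite /inI Hbe leqnn.
Qed.

Lemma notmin n M X Y : mc n X -> mc n Y -> (forall k, X k + Y k <= M k) ->
  (exists k, X k + Y k < M k) -> ~ mingen_J2 n M.
Proof.
move=> HX HY Hle [k Hk] [_ Hmin].
have := Hmin (mon_mul (fun k => nat_of_bool (X k)) (fun k => nat_of_bool (Y k))).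
have H1 : in_J2 n (mon_mul (fun k => nat_of_bool (X k)) (fun k => nat_of_bool (Y k))).
  by exists (fun k => nat_of_bool (X k)), (fun k => nat_of_bool (Y k));
    split; [exact: mc_GJ | split; [exact: mc_GJ | move=> v; exact: leqnn]].
move=> /(_ H1 Hle) /(_ k); rewrite /mon_mul => E; move: Hk; rewrite E ltnn //.
Qed.

Lemma notmin_cov n M X Y : inr n X -> cov n X -> inr n Y -> cov n Y ->
  (forall k, X k + Y k <= M k) -> (exists k, X k + Y k < M k) -> ~ mingen_J2 n M.
Proof.
move=> HrX HcX HrY HcY Hle [k Hk].
have [X0 [HX0 SX]] := mincov_sub HrX HcX.
have [Y0 [HY0 SY]] := mincov_sub HrY HcY.
have Hl : forall k, X0 k + Y0 k <= X k + Y k.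
  have L : forall b1 b2 : bool, (b1 -> b2) -> b1 <= b2 by case; case => // /(_ isT).
  move=> m; exact: leq_add (L _ _ (SX m)) (L _ _ (SY m)).
apply: (notmin HX0 HY0).
- move=> m; exact: leq_trans (Hl m) (Hle m).
- exists k; exact: leq_ltn_trans (Hl k) Hk.
Qed.

Lemma ltop_asym n P Q : ltop n P Q -> ltop n Q P -> False.
Proof.
move=> [k1 [A1 B1 C1 D1]] [k2 [A2 B2 C2 D2]].
case: (ltngtP k1 k2) => H.
- by move: B2; rewrite -(D1 k2 H A2) C2.
- by move: B1; rewrite -(D2 k1 H A1) C1.
- by move: B1; rewrite H C2.
Qed.

Lemma sum_pick (g : nat -> nat) q a : a < q -> \sum_(l < q) ((l : nat) == a) * g l = g a.
Proof.
move=> Ha; rewrite (bigD1 (Ordinal Ha)) //= eqxx mul1n big1 ?addn0 // => l Hl.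
rewrite (_ : (l == a :> nat) = false) ?mul0n //; apply/negbTE.
by apply: contra Hl => /eqP E; apply/eqP/val_inj.
Qed.

Lemma nth_e2 q x y s : s < q -> nth 0 (e2 q x y) s = (s == x) + (s == y).
Proof. by move=> Hs; rewrite /e2 nth_mkseq. Qed.

Lemma sumn_pair (a c : nat) s :
  sumn [seq (l == a) + (l == c) | l <- s] = count (pred1 a) s + count (pred1 c) s.
Proof. elim: s => //= x s ->; lia. Qed.

Lemma mon_of_uniq u : uniq u -> forall k, mon_of u k = sm u k.
Proof. by move=> Hu k; rewrite /mon_of count_uniq_mem. Qed.

Lemma notmax n i j (M : mon) X Y : 2 <= n -> i < j -> j < size (rooted n) ->
  mc n X -> mc n Y -> (forall k, X k + Y k = M k) ->
  ltop n X (sm (nth [::] (rooted n) i)) ->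
  ~ is_max_expr (rooted n) (e2 (size (rooted n)) i j) M.
Proof.
move=> Hn Hij Hj HX HY HM Hlt [_ Hmax].
have [a Ha Ea] := rooted_complete Hn HX.
have [c Hc Ec] := rooted_complete Hn HY.
have Hai : a < i.
  case: (ltnP a i) => // Hia.
  case: (eqVneq a i) => [Eai|Nai].
    move: Hlt => [k [_ K1 K2 _]]; move: K2; rewrite -Eai Ea; by rewrite (negbTE K1).
  have Hlt2 := rooted_sorted (m:=n) (a:=i) (c:=a) ltac:(lia) Ha.
  exfalso; apply: (ltop_asym Hlt); apply: ltop_ext Hlt2 => // k; by rewrite Ea.
have Hua : uniq (nth [::] (rooted n) a) by case: (rooted_mc (mem_nth [::] Ha)).
have Huc : uniq (nth [::] (rooted n) c) by case: (rooted_mc (mem_nth [::] Hc)).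
have HE : is_expr (rooted n) (e2 (size (rooted n)) a c) M.
  split; first by rewrite size_mkseq.
  split; first rewrite /e2 /mkseq sumn_pair !count_uniq_mem ?iota_uniq // !mem_iota.
    by rewrite Ha Hc.
  move=> k; rewrite /expr_mon.
  rewrite (eq_bigr (fun l : 'I_(size (rooted n)) => ((l : nat) == a) * mon_of (nth [::] (rooted n) l) k +
                                   ((l : nat) == c) * mon_of (nth [::] (rooted n) l) k)); last first.
    by move=> l _; rewrite nth_e2 // mulnDl.
  rewrite big_split /= !(sum_pick (fun l => mon_of (nth [::] (rooted n) l) k)) //.
  by rewrite !mon_of_uniq // Ea Ec HM.
apply: (Hmax _ HE).
exists (minn a c); split.
  + move=> s Hs; rewrite !nth_e2; lia.
  + rewrite !nth_e2; lia.
Qed.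

Lemma ble (b1 b2 : bool) : (b1 -> b2) -> b1 <= b2.
Proof. by case: b1; case: b2 => // /(_ isT). Qed.

Lemma lt_sum (a b c d : bool) : (a -> b) -> (c -> d) -> (a != b) || (c != d) -> a + c < b + d.
Proof. by case: a; case: b; case: c; case: d => //= A B; try (have := A isT); try (have := B isT). Qed.

Lemma caseB n U W v : inr n U -> inr n W -> cov n U -> cov n W ->
  ~~ U v -> W v -> U v.+1 -> W v.+1 -> v < n -> (v.+2 <= n -> U v.+2) ->
  exists X Y, [/\ inr n X /\ cov n X, inr n Y /\ cov n Y,
     forall k, X k + Y k <= U k + W k & exists k, X k + Y k < U k + W k].
Proof.
move=> HrU HrW HcU HcW Uv Wv Uv1 Wv1 Hvn Uv2.
have [U' [W' [[HrU' HrW'] [HcU' HcW'] Hsum Habove [Ee1 Ee2]]]] :=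
  @flip n U W v HrU HrW HcU HcW ltac:(by rewrite (negbTE Uv) Wv)
    ltac:(by move=> _; rewrite Uv1 Wv1).
exists (fun k => U' k && (k != v.+1)), W'; split => //.
- split; first by move=> k /andP [/HrU'].
  move=> k K1 K2.
  case: (eqVneq k v) => [Ekv|Hkv].
    by rewrite Ekv Ee1 Wv /= (ltn_eqF (ltnSn v)).
  case: (eqVneq k v.+1) => [Ekv|Hkv1].
    have Hv2 : v.+2 <= n by rewrite -Ekv.
    have [E2 _] := Habove v.+2 (leqnSn _).
    by rewrite Ekv E2 (Uv2 Hv2) /= (gtn_eqF (ltnSn v.+1)) orbT.
  have := HcU' k K1 K2.
  have -> : (k.+1 != v.+1) by rewrite eqSS.
  by rewrite /= !andbT.
- by move=> k; rewrite -Hsum leq_add2r; apply: ble => /andP [].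
- exists v.+1; rewrite -Hsum eqxx andbF /=.
  by have [-> _] := Habove v.+1 (ltnSn v); rewrite Uv1 add1n ltnS leqnn.
Qed.

Lemma caseA n U W v : inr n U -> inr n W -> cov n U -> cov n W ->
  U v.+1 -> ~~ W v.+1 -> (v.+2 <= n -> U v.+2) -> (v.+2 <= n -> W v.+2) -> v < n ->
  exists U' W', [/\ inr n U' /\ cov n U', inr n W' /\ cov n W',
     forall k, U' k + W' k = U k + W k & ltop n U' U].
Proof.
move=> HrU HrW HcU HcW Uv1 Wv1 Uv2 Wv2 Hvn.
have [U' [W' [[HrU' HrW'] [HcU' HcW'] Hsum Habove [Ee1 Ee2]]]] :=
  @flip n U W v.+1 HrU HrW HcU HcW ltac:(by rewrite Uv1 (negbTE Wv1))
    ltac:(by move=> H; rewrite Uv2 ?Wv2).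
exists U', W'; split => //.
exists v.+1; split => //.
- by rewrite Ee1.
- by move=> m M1 M2; have [-> _] := Habove m M1.
Qed.

Theorem proposition4p2 (n i j : nat) :
  2 <= n ->
  0 < i -> i < j -> j < size (rooted n) ->
  (exists v, [/\ 1 <= v <= n,
     mon_dvd (var v) (mon_of (nth [::] (rooted n) j)) &
     in_colon [seq mon_of u | u <- take i (rooted n)]
              (mon_of (nth [::] (rooted n) i)) (var v)]) ->
  ~ mingen_J2 n (mon_mul (mon_of (nth [::] (rooted n) i))
                        (mon_of (nth [::] (rooted n) j)))
  \/ ~ is_max_expr (rooted n) (e2 (size (rooted n)) i j)
         (mon_mul (mon_of (nth [::] (rooted n) i))
                  (mon_of (nth [::] (rooted n) j))).
Proof.
move=> Hn Hi Hij Hj [v [Hv Hdv Hcol]].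
have Hi' : i < size (rooted n) by apply: ltn_trans Hij Hj.
have [Hui HU] := rooted_mc (mem_nth [::] Hi').
have [Huj HW] := rooted_mc (mem_nth [::] Hj).
have HM : forall k, mon_mul (mon_of (nth [::] (rooted n) i)) (mon_of (nth [::] (rooted n) j)) k
    = sm (nth [::] (rooted n) i) k + sm (nth [::] (rooted n) j) k.
  by move=> k; rewrite /mon_mul !mon_of_uniq.
have Wv : sm (nth [::] (rooted n) j) v.
  by have := Hdv v; rewrite /var eqxx mon_of_uniq // lt0b.
case: Hcol => l Hl Hd.
rewrite size_map size_takel in Hl; last exact: ltnW.
rewrite (nth_map [::]) in Hd; last by rewrite size_takel //; exact: ltnW.
rewrite nth_take in Hd; last done.
have Hl' : l < size (rooted n) by apply: ltn_trans Hl Hi'.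
have [Hul HL] := rooted_mc (mem_nth [::] Hl').
have Hsub : forall k, sm (nth [::] (rooted n) l) k -> (k == v) || sm (nth [::] (rooted n) i) k.
  move=> k Hk; have := Hd k; rewrite /mon_mul /var !mon_of_uniq // Hk.
  by case: (k == v); case: (sm _ k).
have Hlt := rooted_sorted Hl Hi'.
have [Uv Hvn Uv1 Uv2] := key HU HL Hsub Hlt.
have [HrU HcU HmU] := HU; have [HrW HcW HmW] := HW.
move: HM Uv Uv1 Uv2 HrU HcU HmU HU Hlt Wv HrW HcW HmW HW.
set U := sm (nth [::] (rooted n) i); set W := sm (nth [::] (rooted n) j).
move=> HM Uv Uv1 Uv2 HrU HcU HmU HU Hlt Wv HrW HcW HmW HW.
case Wv1: (W v.+1).
- left.
  have [X [Y [[HrX HcX] [HrY HcY] Hle [k Hk]]]] := caseB HrU HrW HcU HcW Uv Wv Uv1 Wv1 Hvn Uv2.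
  apply: (notmin_cov HrX HcX HrY HcY).
    by move=> m; rewrite HM.
  by exists k; rewrite HM.
- have Wv2 : v.+2 <= n -> W v.+2.
    by move=> H; have := HcW v.+1 (ltn0Sn _) H; rewrite Wv1.
  have [U' [W' [[HrU' HcU'] [HrW' HcW'] Hsum Hlt']]] :=
    caseA HrU HrW HcU HcW Uv1 (negbT Wv1) Uv2 Wv2 Hvn.
  have [X0 [HX0 SX]] := mincov_sub HrU' HcU'.
  have [Y0 [HY0 SY]] := mincov_sub HrW' HcW'.
  case: (classic ((forall k, X0 k = U' k) /\ (forall k, Y0 k = W' k))) => [[EX EY]|Hne].
  + right. apply: (notmax Hn Hij Hj HX0 HY0).
      by move=> k; rewrite EX EY Hsum HM.
    by apply: ltop_ext Hlt' => // k; rewrite EX.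
  + left. apply: (notmin HX0 HY0).
      move=> k; rewrite HM -Hsum; exact: leq_add (ble (SX k)) (ble (SY k)).
    have [k Hk] : exists k, (X0 k != U' k) || (Y0 k != W' k).
      apply: NNPP => Hno; apply: Hne; split => k; apply/eqP; apply: contraT => H;
      exfalso; apply: Hno; exists k; by rewrite H ?orbT.
    exists k; rewrite HM -Hsum.
    exact: lt_sum (SX k) (SY k) Hk.
Qed.
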